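(* Let $\alpha\in[0,1]$, $\kappa_{rg}\in[0,1)$, $\kappa_{rs}>0$. Suppose that at iteration $k$ a step $s_k\neq 0$, a symmetric matrix $M_k$ and a residual $r_k$ satisfy $(H_k+M_k)s_k=-g_k+r_k$ with $\|r_k\|\le\min[\kappa_{rg}\|g_k\|,\kappa_{rs}\|M_ks_k\|]$, $M_k\succeq0$ and $H_k+M_k\succeq 0$, and moreover $$\lambda_{\min}(M_k)\le\bar\kappa_\lambda\|s_k\|^\alpha$$ for some constant $\bar\kappa_\lambda>1$. Then $$\lambda_{\min}(H_k)+\lambda_{\min}(M_k)\le\kappa_\lambda\max\{|\lambda_{\min}(H_k)|,\|g_k\|^{\alpha/(1+\alpha)}\}\quad\text{with }\kappa_\lambda=2\bar\kappa_\lambda^{1/(1+\alpha)}(1+\kappa_{rg}).$$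
   Context: $f:\mathbb{R}^n\to\mathbb{R}$ is twice continuously differentiable, $g_k=\nabla f(x_k)$, $H_k=\nabla^2 f(x_k)$. $\|\cdot\|$ is the Euclidean norm, $\lambda_{\min}$ the leftmost eigenvalue of a symmetric matrix, $M\succeq0$ means positive semidefinite. *)

(* Defs.v *)
From Stdlib Require Import Reals.
Open Scope R_scope.

(* Vectors / matrices of dimension n: only indices < n are meaningful. *)
Definition vec := nat -> R.
Definition mat := nat -> nat -> R.

Fixpoint rsum (n : nat) (f : nat -> R) : R :=
  match n with O => 0 | S m => rsum m f + f m end.

Definition dot (n : nat) (u v : vec) : R := rsum n (fun i => u i * v i).
Definition norm (n : nat) (v : vec) : R := sqrt (dot n v v).
Definition mv (n : nat) (A : mat) (v : vec) : vec :=
  fun i => rsum n (fun j => A i j * v j).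
Definition madd (A B : mat) : mat := fun i j => A i j + B i j.

Definition symmetric (n : nat) (A : mat) : Prop :=
  forall i j, (i < n)%nat -> (j < n)%nat -> A i j = A j i.
Definition psd (n : nat) (A : mat) : Prop :=
  forall v : vec, 0 <= dot n v (mv n A v).
Definition nonzerov (n : nat) (v : vec) : Prop :=
  exists i, (i < n)%nat /\ v i <> 0.
Definition eigenvalue (n : nat) (A : mat) (l : R) : Prop :=
  exists v : vec, nonzerov n v /\ forall i, (i < n)%nat -> mv n A v i = l * v i.
Definition is_lambda_min (n : nat) (A : mat) (l : R) : Prop :=
  eigenvalue n A l /\ forall mu, eigenvalue n A mu -> l <= mu.

(* real power x^y for x >= 0, with 0^y = 0 for y <> 0 and 0^0 = 1 *)
Definition powr (x y : R) : R :=
  if Req_EM_T x 0 then (if Req_EM_T y 0 then 1 else 0) else Rpower x y.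

(* Main.v *)
Require Import Defs.
From Stdlib Require Import Reals Lra Lia ClassicalEpsilon.
Open Scope R_scope.

Lemma rsum_ext n f g : (forall i, (i < n)%nat -> f i = g i) -> rsum n f = rsum n g.
Proof. induction n; simpl; intros; auto. rewrite IHn by (intros; apply H; lia). rewrite H by lia. auto. Qed.

Lemma rsum_plus n f g : rsum n (fun i => f i + g i) = rsum n f + rsum n g.
Proof. induction n; simpl; [lra|]. rewrite IHn. lra. Qed.

Lemma rsum_scal n c f : rsum n (fun i => c * f i) = c * rsum n f.
Proof. induction n; simpl; [lra|]. rewrite IHn. lra. Qed.

Lemma rsum_le n f g : (forall i, (i < n)%nat -> f i <= g i) -> rsum n f <= rsum n g.
Proof. induction n; simpl; intros; [lra|]. assert (f n <= g n) by (apply H; lia).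
  assert (rsum n f <= rsum n g) by (apply IHn; intros; apply H; lia). lra. Qed.

Lemma rsum_swap n m F : rsum n (fun i => rsum m (fun j => F i j)) = rsum m (fun j => rsum n (fun i => F i j)).
Proof. induction n; simpl.
  - induction m; simpl; [lra|]. rewrite <- IHm. lra.
  - rewrite IHn. rewrite <- rsum_plus. auto. Qed.

Lemma rsum_nonneg n f : (forall i, (i < n)%nat -> 0 <= f i) -> 0 <= rsum n f.
Proof. intros. replace 0 with (rsum n (fun _ => 0)). apply rsum_le; auto.
  induction n; simpl; auto. rewrite IHn. lra. intros; apply H; lia. Qed.

Lemma rsum_term n f k : (forall i, (i < n)%nat -> 0 <= f i) -> (k < n)%nat -> f k <= rsum n f.
Proof. induction n; intros; [lia|]. simpl.
  assert (0 <= rsum n f) by (apply rsum_nonneg; intros; apply H; lia).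
  destruct (Nat.eq_dec k n). subst. lra.
  assert (f k <= rsum n f) by (apply IHn; [intros; apply H; lia|lia]).
  assert (0 <= f n) by (apply H; lia). lra. Qed.

Lemma dot_self_nonneg n v : 0 <= dot n v v.
Proof. unfold dot. apply rsum_nonneg. intros. nra. Qed.

Lemma dot_sym n u v : dot n u v = dot n v u.
Proof. unfold dot. apply rsum_ext. intros; ring. Qed.

Lemma coord_sq_le n v i : (i < n)%nat -> v i * v i <= dot n v v.
Proof. intros. unfold dot. apply (rsum_term n (fun i => v i * v i)); auto. intros; nra. Qed.

Lemma dot_zero n v : dot n v v = 0 -> forall i, (i < n)%nat -> v i = 0.
Proof. intros. pose proof (coord_sq_le n v i H0). assert (0 <= v i * v i) by nra. nra. Qed.

Lemma mv_sym n A x y : symmetric n A -> dot n y (mv n A x) = dot n x (mv n A y).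
Proof. intros HA. unfold dot, mv.
  transitivity (rsum n (fun i => rsum n (fun j => y i * A i j * x j))).
  { apply rsum_ext; intros. rewrite <- rsum_scal. apply rsum_ext; intros; ring. }
  transitivity (rsum n (fun i => rsum n (fun j => x i * A i j * y j))).
  2:{ apply rsum_ext; intros. rewrite <- rsum_scal. apply rsum_ext; intros; ring. }
  rewrite rsum_swap. apply rsum_ext; intros i Hi. apply rsum_ext; intros j Hj.
  rewrite (HA i j) by auto. ring. Qed.

Lemma cs_sq n u v : dot n u v * dot n u v <= dot n u u * dot n v v.
Proof.
  assert (Hq : forall t, 0 <= dot n u u + 2 * t * dot n u v + t * t * dot n v v).
  { intros. transitivity (dot n (fun i => u i + t * v i) (fun i => u i + t * v i)).
    2:{ apply Req_le. unfold dot. rewrite <- !rsum_scal, <- !rsum_plus. apply rsum_ext; intros; ring. }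
    apply dot_self_nonneg. }
  pose proof (dot_self_nonneg n u). pose proof (dot_self_nonneg n v).
  destruct (Req_dec (dot n v v) 0).
  - assert (dot n u v = 0).
    { unfold dot. transitivity (rsum n (fun _ => 0)). apply rsum_ext; intros.
      rewrite (dot_zero n v H1 i H2). ring. clear. induction n; simpl; auto. rewrite IHn; ring. }
    rewrite H2, H1. lra.
  - specialize (Hq (- dot n u v / dot n v v)).
    assert (0 < dot n v v) by lra.
    assert (E: dot n u u + 2 * (- dot n u v / dot n v v) * dot n u v +
       (- dot n u v / dot n v v) * (- dot n u v / dot n v v) * dot n v v
       = (dot n u u * dot n v v - dot n u v * dot n u v) / dot n v v) by (field; lra).
    rewrite E in Hq. apply Rmult_le_compat_r with (r := dot n v v) in Hq; [|lra].
    unfold Rdiv in Hq. rewrite Rmult_assoc, Rinv_l, Rmult_1_r, Rmult_0_l in Hq; lra.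
Qed.

Lemma cs n u v : dot n u v <= norm n u * norm n v.
Proof. unfold norm. rewrite <- sqrt_mult by apply dot_self_nonneg.
  apply Rle_trans with (sqrt (dot n u v * dot n u v)).
  - destruct (Rle_dec 0 (dot n u v)).
    + rewrite sqrt_square; lra.
    + pose proof (sqrt_pos (dot n u v * dot n u v)). lra.
  - apply sqrt_le_1_alt. apply cs_sq. Qed.

Lemma quad_zero b q : (forall t, 0 <= 2 * t * b + t * t * q) -> b = 0.
Proof. intros H. destruct (Req_dec b 0); auto. exfalso.
  set (e := / (Rabs q + 1)).
  assert (He : 0 < e) by (unfold e; apply Rinv_0_lt_compat; pose proof (Rabs_pos q); lra).
  assert (Heq : e * Rabs q < 1).
  { unfold e. apply Rmult_lt_reg_r with (Rabs q + 1). pose proof (Rabs_pos q); lra.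
    rewrite Rmult_comm, <- Rmult_assoc, Rinv_r_simpl_r. lra. pose proof (Rabs_pos q); lra. }
  assert (e * q < 1). { pose proof (Rle_abs q). nra. }
  specialize (H (- e * b)). assert (0 < b * b) by nra.
  assert (E: 2 * (- e * b) * b + - e * b * (- e * b) * q = e * (b*b) * (e * q - 2)) by ring.
  rewrite E in H. assert (0 < e * (b*b)) by (apply Rmult_lt_0_compat; lra).
  assert (e * (b*b) * (e * q - 2) < 0). { apply Rmult_lt_reg_l with (/(e*(b*b))). apply Rinv_0_lt_compat; lra.
  rewrite <- Rmult_assoc, Rinv_l, Rmult_0_r; lra. }
  lra. Qed.

Lemma var_eig n A x0 m : symmetric n A -> dot n x0 x0 = 1 -> dot n x0 (mv n A x0) = m ->
  (forall x, m * dot n x x <= dot n x (mv n A x)) -> eigenvalue n A m.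
Proof. intros HA Hu Hf Hmin.
  set (y := fun i => mv n A x0 i - m * x0 i).
  assert (Hexp : forall t, dot n (fun i => x0 i + t * y i) (mv n A (fun i => x0 i + t * y i))
      - m * dot n (fun i => x0 i + t * y i) (fun i => x0 i + t * y i)
      = 2 * t * (dot n y (mv n A x0) - m * dot n y x0) + t * t * (dot n y (mv n A y) - m * dot n y y)).
  { intros t.
    assert (E1 : dot n (fun i => x0 i + t * y i) (mv n A (fun i => x0 i + t * y i)) =
       dot n x0 (mv n A x0) + t * dot n x0 (mv n A y) + t * dot n y (mv n A x0) + t * t * dot n y (mv n A y)).
    { assert (Hmv : forall i, mv n A (fun i => x0 i + t * y i) i = mv n A x0 i + t * mv n A y i).
      { intros. unfold mv. rewrite <- rsum_scal, <- rsum_plus. apply rsum_ext; intros; ring. }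
      unfold dot. rewrite <- !rsum_scal, <- !rsum_plus. apply rsum_ext; intros.
      rewrite Hmv. ring. }
    assert (E2 : dot n (fun i => x0 i + t * y i) (fun i => x0 i + t * y i) =
       dot n x0 x0 + 2 * t * dot n y x0 + t * t * dot n y y).
    { unfold dot. rewrite <- !rsum_scal, <- !rsum_plus. apply rsum_ext; intros. ring. }
    rewrite E1, E2, (mv_sym n A y x0 HA), Hf, Hu. ring. }
  assert (Hb : dot n y (mv n A x0) - m * dot n y x0 = 0).
  { apply (quad_zero _ (dot n y (mv n A y) - m * dot n y y)). intros t.
    rewrite <- Hexp. specialize (Hmin (fun i => x0 i + t * y i)). lra. }
  assert (Hyy : dot n y y = 0).
  { rewrite <- Hb. unfold dot.
    transitivity (rsum n (fun i => y i * mv n A x0 i) + -1 * rsum n (fun i => m*(y i * x0 i))).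
    rewrite <- rsum_scal, <- rsum_plus; apply rsum_ext; intros; unfold y; ring.
    rewrite rsum_scal; ring. }
  exists x0. split.
  - destruct (classic (exists i, (i < n)%nat /\ x0 i <> 0)) as [Hc|Hc]; auto.
    exfalso. assert (dot n x0 x0 = 0).
    { unfold dot. transitivity (rsum n (fun _ => 0)). apply rsum_ext; intros.
      destruct (Req_dec (x0 i) 0). rewrite H0; ring. exfalso; apply Hc; eauto.
      clear. induction n; simpl; auto. rewrite IHn; ring. }
    lra.
  - intros i Hi. pose proof (dot_zero n y Hyy i Hi). unfold y in H. lra.
Qed.

Definition incr (phi : nat -> nat) := forall a b, (a < b)%nat -> (phi a < phi b)%nat.

Lemma incr_step phi : (forall k, (phi k < phi (S k))%nat) -> incr phi.
Proof. intros H a b Hab. induction Hab. apply H. specialize (H m). lia. Qed.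

Lemma incr_ge phi : incr phi -> forall k, (k <= phi k)%nat.
Proof. intros H k. induction k. lia. specialize (H k (S k)). lia. Qed.

Lemma cv_sub u l phi : (forall k, (k <= phi k)%nat) -> Un_cv u l -> Un_cv (fun k => u (phi k)) l.
Proof. intros Hp Hu eps He. destruct (Hu eps He) as [N HN]. exists N. intros k Hk.
  apply HN. specialize (Hp k). lia. Qed.

Lemma inv_cv : Un_cv (fun k => / (INR k + 1)) 0.
Proof. intros eps He. destruct (archimed_cor1 eps He) as [N [HN HN0]]. exists N. intros k Hk.
  unfold Rdist. rewrite Rminus_0_r. rewrite Rabs_right.
  2:{ apply Rle_ge, Rlt_le, Rinv_0_lt_compat. pose proof (pos_INR k); lra. }
  apply Rle_lt_trans with (/ INR N); auto. apply Rinv_le_contravar.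
  apply lt_0_INR; auto. apply le_INR in Hk. lra. Qed.

Lemma valadh_subseq u l : ValAdh u l -> exists phi, incr phi /\ Un_cv (fun k => u (phi k)) l.
Proof. intros H.
  assert (H1 : forall N k, exists p, (N <= p)%nat /\ Rabs (u p - l) < / (INR k + 1)).
  { intros N k. assert (Hp : 0 < / (INR k + 1)) by (apply Rinv_0_lt_compat; pose proof (pos_INR k); lra).
    destruct (H (disc l (mkposreal _ Hp)) N) as [p [Hp1 Hp2]].
    exists (mkposreal _ Hp). intros y Hy; exact Hy.
    exists p. split; auto. }
  set (c := fun N k => proj1_sig (constructive_indefinite_description _ (H1 N k))).
  assert (Hc : forall N k, (N <= c N k)%nat /\ Rabs (u (c N k) - l) < / (INR k + 1)).
  { intros. unfold c. destruct (constructive_indefinite_description _ (H1 N k)). auto. }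
  set (phi := fix phi k := match k with O => c O O | S k' => c (S (phi k')) (S k') end).
  assert (Hi : forall k, (phi k < phi (S k))%nat).
  { intros. simpl. destruct (Hc (S (phi k)) (S k)). lia. }
  assert (Hd : forall k, Rabs (u (phi k) - l) < / (INR k + 1)).
  { intros [|k]. simpl. destruct (Hc 0%nat 0%nat). auto. simpl phi. destruct (Hc (S (phi k)) (S k)). auto. }
  exists phi. split. apply incr_step; auto.
  intros eps He. destruct (inv_cv eps He) as [N HN]. exists N. intros k Hk.
  specialize (HN k Hk). unfold Rdist in *. rewrite Rminus_0_r in HN.
  pose proof (Hd k). pose proof (Rle_abs (/ (INR k + 1))). lra. Qed.

Lemma box_subseq n (xs : nat -> vec) :
  (forall k i, (i < n)%nat -> Rabs (xs k i) <= 1) ->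
  exists phi l, incr phi /\ forall i, (i < n)%nat -> Un_cv (fun k => xs (phi k) i) (l i).
Proof. intros Hb.
  assert (forall m, (m <= n)%nat -> exists phi l, incr phi /\ forall i, (i < m)%nat -> Un_cv (fun k => xs (phi k) i) (l i)).
  { induction m; intros Hm.
    - exists (fun k => k), (fun _ => 0). split. intros a b; auto. intros; lia.
    - destruct IHm as [phi [l [Hphi Hl]]]. lia.
      destruct (Bolzano_Weierstrass (fun k => xs (phi k) m) (fun c => -1 <= c <= 1) (compact_P3 (-1) 1)) as [lm Hlm].
      { intros k. pose proof (Hb (phi k) m ltac:(lia)). pose proof (Rle_abs (xs (phi k) m)); pose proof (Rle_abs (- xs (phi k) m)); rewrite Rabs_Ropp in *; lra. }
      destruct (valadh_subseq _ _ Hlm) as [psi [Hpsi Hcv]].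
      exists (fun k => phi (psi k)), (fun i => if Nat.eqb i m then lm else l i). split.
      + intros a b Hab. apply Hphi, Hpsi, Hab.
      + intros i Hi. destruct (Nat.eqb_spec i m). subst. exact Hcv.
        apply (cv_sub (fun k => xs (phi k) i)). apply incr_ge; auto. apply Hl. lia. }
  apply H. lia. Qed.

Lemma cv_rsum n (a : nat -> nat -> R) (b : nat -> R) :
  (forall i, (i < n)%nat -> Un_cv (fun k => a k i) (b i)) -> Un_cv (fun k => rsum n (a k)) (rsum n b).
Proof. induction n; intros H; simpl.
  - intros eps He. exists O. intros. unfold Rdist. rewrite Rminus_0_r, Rabs_R0. auto.
  - apply CV_plus. apply IHn. intros; apply H; lia. apply H; lia. Qed.

Lemma cv_const c : Un_cv (fun _ => c) c.
Proof. intros eps He. exists O. intros. unfold Rdist. rewrite Rminus_diag_eq, Rabs_R0; auto. Qed.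

Lemma sq_le1 a : a * a <= 1 -> Rabs a <= 1.
Proof. intros. unfold Rabs. destruct (Rcase_abs a); nra. Qed.

Lemma hom_f n A c x : dot n (fun i => c * x i) (mv n A (fun i => c * x i)) = c * c * dot n x (mv n A x).
Proof. assert (Hmv : forall i, mv n A (fun i => c * x i) i = c * mv n A x i).
  { intros. unfold mv. rewrite <- rsum_scal. apply rsum_ext; intros; ring. }
  unfold dot. rewrite <- rsum_scal. apply rsum_ext; intros. rewrite Hmv. ring. Qed.

Lemma hom_d n c x : dot n (fun i => c * x i) (fun i => c * x i) = c * c * dot n x x.
Proof. unfold dot. rewrite <- rsum_scal. apply rsum_ext; intros. ring. Qed.

Lemma zero_f n A x : dot n x x = 0 -> dot n x (mv n A x) = 0.
Proof. intros H. unfold dot. transitivity (rsum n (fun _ => 0)).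
  apply rsum_ext; intros. rewrite (dot_zero n x H i H0). ring.
  clear. induction n; simpl; auto. rewrite IHn; ring. Qed.

Lemma rayleigh n A l : symmetric n A -> is_lambda_min n A l ->
  forall x, l * dot n x x <= dot n x (mv n A x).
Proof. intros HA [[v [[i0 [Hi0 Hv0]] _]] Hmin].
  set (f := fun x => dot n x (mv n A x)).
  set (K := rsum n (fun i => rsum n (fun j => Rabs (A i j)))).
  assert (HK : forall x, dot n x x = 1 -> - K <= f x).
  { intros x Hx. unfold f, K, dot, mv.
    transitivity (rsum n (fun i => rsum n (fun j => - Rabs (A i j)))).
    { apply Req_le. rewrite <- (Rmult_1_l (rsum _ _)) at 1. rewrite Ropp_mult_distr_l, <- rsum_scal.
      apply rsum_ext; intros. rewrite <- rsum_scal. apply rsum_ext; intros. ring. }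
    apply rsum_le; intros i Hi. rewrite <- rsum_scal. apply rsum_le; intros j Hj.
    pose proof (sq_le1 _ (eq_ind _ (fun z => x i * x i <= z) (coord_sq_le n x i Hi) _ Hx)).
    pose proof (sq_le1 _ (eq_ind _ (fun z => x j * x j <= z) (coord_sq_le n x j Hj) _ Hx)).
    assert (Rabs (x i * (A i j * x j)) <= Rabs (A i j)).
    { rewrite !Rabs_mult. pose proof (Rabs_pos (x i)). pose proof (Rabs_pos (x j)). pose proof (Rabs_pos (A i j)).
      apply Rle_trans with (1 * (Rabs (A i j) * 1)); [|lra].
      apply Rmult_le_compat; auto. apply Rmult_le_pos; auto. apply Rmult_le_compat; auto; lra. }
    pose proof (Rle_abs (- (x i * (A i j * x j)))). rewrite Rabs_Ropp in H2. lra. }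
  assert (Hvv : 0 < dot n v v).
  { pose proof (coord_sq_le n v i0 Hi0). assert (0 < v i0 * v i0) by (apply Rsqr_pos_lt; auto). lra. }
  set (u := fun i => / sqrt (dot n v v) * v i).
  assert (Hu : dot n u u = 1).
  { unfold u. rewrite hom_d. rewrite <- Rinv_mult, sqrt_sqrt by lra. field. lra. }
  set (E := fun y => exists x, dot n x x = 1 /\ y = - f x).
  destruct (completeness E) as [L [HL1 HL2]].
  { exists K. intros y [x [Hx ->]]. pose proof (HK x Hx). lra. }
  { exists (- f u). exists u. auto. }
  set (m := - L).
  assert (Hm1 : forall x, dot n x x = 1 -> m <= f x).
  { intros x Hx. assert (- f x <= L) by (apply HL1; exists x; auto). unfold m; lra. }
  assert (Hm : forall x, m * dot n x x <= f x).
  { intros x. destruct (Req_dec (dot n x x) 0) as [H0|H0].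
    - unfold f. rewrite zero_f, H0 by auto. lra.
    - pose proof (dot_self_nonneg n x). set (c := / sqrt (dot n x x)).
      assert (Hc : c * c * dot n x x = 1).
      { unfold c. rewrite <- Rinv_mult, sqrt_sqrt by lra. field. lra. }
      specialize (Hm1 (fun i => c * x i)). unfold f in Hm1. rewrite hom_f, hom_d in Hm1.
      specialize (Hm1 Hc). assert (0 < c * c) by (apply Rmult_lt_0_compat; unfold c; apply Rinv_0_lt_compat, sqrt_lt_R0; lra).
      apply Rmult_le_reg_l with (c * c); auto. unfold f.
      replace (c * c * (m * dot n x x)) with (m * (c * c * dot n x x)) by ring. rewrite Hc. lra. }
  assert (Hseq : forall k, exists x, dot n x x = 1 /\ f x < m + / (INR k + 1)).
  { intros k. apply NNPP. intros Hn.
    assert (Hp : 0 < / (INR k + 1)) by (apply Rinv_0_lt_compat; pose proof (pos_INR k); lra).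
    assert (L <= L - / (INR k + 1)).
    { apply HL2. intros y [x [Hx ->]]. destruct (Rle_dec (- f x) (L - / (INR k + 1))); auto.
      exfalso. apply Hn. exists x. split; auto. unfold m. lra. }
    lra. }
  set (xs := fun k => proj1_sig (constructive_indefinite_description _ (Hseq k))).
  assert (Hxs : forall k, dot n (xs k) (xs k) = 1 /\ f (xs k) < m + / (INR k + 1)).
  { intros. unfold xs. destruct (constructive_indefinite_description _ (Hseq k)). auto. }
  destruct (box_subseq n xs) as [phi [x0 [Hphi Hcv]]].
  { intros k i Hi. destruct (Hxs k) as [Hk _]. apply sq_le1. rewrite <- Hk. apply coord_sq_le; auto. }
  assert (Hd : Un_cv (fun k => dot n (xs (phi k)) (xs (phi k))) (dot n x0 x0)).
  { apply cv_rsum. intros. apply CV_mult; apply Hcv; auto. }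
  assert (Hx0 : dot n x0 x0 = 1).
  { apply (UL_sequence _ _ _ Hd). eapply Un_cv_ext. 2: apply (cv_const 1). intros k. simpl. symmetry. apply Hxs. }
  assert (Hf : Un_cv (fun k => f (xs (phi k))) (f x0)).
  { apply cv_rsum. intros. apply CV_mult. apply Hcv; auto. unfold mv. apply cv_rsum.
    intros. apply CV_mult. apply cv_const. apply Hcv; auto. }
  assert (Hfx0 : f x0 <= m).
  { replace m with (m + 0) by ring.
    apply (Rle_cv_lim (Un := fun k => f (xs (phi k))) (Vn := fun k => m + / (INR k + 1))); auto.
    - intros k. destruct (Hxs (phi k)) as [_ H1]. assert (H := incr_ge phi Hphi k).
      assert (/ (INR (phi k) + 1) <= / (INR k + 1)).
      { apply Rinv_le_contravar. pose proof (pos_INR k); lra. apply le_INR in H. lra. }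
      lra.
    - apply CV_plus. apply cv_const. apply inv_cv. }
  pose proof (Hm1 x0 Hx0).
  assert (Heig : eigenvalue n A m).
  { apply (var_eig n A x0 m HA Hx0). fold (f x0). lra. exact Hm. }
  pose proof (Hmin m Heig). intros x. pose proof (Hm x). pose proof (dot_self_nonneg n x).
  fold (f x). nra.
Qed.

Lemma ln_le' x y : 0 < x -> x <= y -> ln x <= ln y.
Proof. intros. destruct (Req_dec x y). subst; lra. apply Rlt_le, ln_increasing; lra. Qed.

Lemma exp_le' x y : x <= y -> exp x <= exp y.
Proof. intros. destruct (Req_dec x y). subst; lra. apply Rlt_le, exp_increasing; lra. Qed.

Lemma powr_pos x y : x <> 0 -> powr x y = exp (y * ln x).
Proof. intros. unfold powr. destruct (Req_EM_T x 0). contradiction. reflexivity. Qed.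

Theorem lemma2p2 (n : nat) (H M : mat) (g s r : vec)
  (alpha krg krs kbar lH lM : R) :
  0 <= alpha <= 1 -> 0 <= krg < 1 -> 0 < krs ->
  symmetric n H -> symmetric n M ->
  nonzerov n s ->
  (forall i, (i < n)%nat -> mv n (madd H M) s i = - g i + r i) ->
  norm n r <= Rmin (krg * norm n g) (krs * norm n (mv n M s)) ->
  psd n M -> psd n (madd H M) ->
  1 < kbar ->
  is_lambda_min n H lH -> is_lambda_min n M lM ->
  lM <= kbar * powr (norm n s) alpha ->
  lH + lM <= (2 * powr kbar (1 / (1 + alpha)) * (1 + krg))
             * Rmax (Rabs lH) (powr (norm n g) (alpha / (1 + alpha))).
Proof.
  intros Ha Hk Hks HsH HsM [i0 [Hi0 Hs0]] Heq Hr _ _ Hkb HlH HlM HlMb.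
  set (S := norm n s) in *. set (G := norm n g) in *. set (Rr := norm n r) in *.
  assert (Hss : 0 < dot n s s).
  { pose proof (coord_sq_le n s i0 Hi0). assert (0 < s i0 * s i0) by (apply Rsqr_pos_lt; auto). lra. }
  assert (HS : 0 < S) by (apply sqrt_lt_R0; auto).
  assert (HSS : dot n s s = S * S) by (unfold S, norm; rewrite sqrt_sqrt; lra).
  assert (HG : 0 <= G) by apply sqrt_pos.
  assert (HR : Rr <= krg * G) by (pose proof (Rmin_l (krg * G) (krs * norm n (mv n M s))); lra).
  assert (Hq : (lH + lM) * dot n s s <= dot n s (fun i => - g i) + dot n s r).
  { pose proof (rayleigh n H lH HsH HlH s). pose proof (rayleigh n M lM HsM HlM s).
    assert (dot n s (mv n (madd H M) s) = dot n s (mv n H s) + dot n s (mv n M s)).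
    { unfold dot. rewrite <- rsum_plus. apply rsum_ext; intros. unfold mv, madd.
      rewrite <- Rmult_plus_distr_l, <- rsum_plus. f_equal. apply rsum_ext; intros; ring. }
    assert (dot n s (mv n (madd H M) s) = dot n s (fun i => - g i) + dot n s r).
    { unfold dot. rewrite <- rsum_plus. apply rsum_ext; intros. rewrite Heq by auto. ring. }
    lra. }
  assert (Hng : norm n (fun i => - g i) = G).
  { unfold G, norm, dot. f_equal. apply rsum_ext; intros; ring. }
  pose proof (cs n s (fun i => - g i)) as C1. pose proof (cs n s r) as C2. rewrite Hng in C1. fold S in C1, C2. fold Rr in C2.
  assert (Hmain : (lH + lM) * S <= (1 + krg) * G).
  { rewrite HSS in Hq. apply Rmult_le_reg_r with S; auto. nra. }
  assert (Hpk : 1 <= powr kbar (1 / (1 + alpha))).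
  { rewrite powr_pos by lra. apply Rle_trans with (exp 0); [rewrite exp_0; lra|]. apply exp_le'. apply Rmult_le_pos.
    apply Rlt_le, Rdiv_lt_0_compat; lra.
    rewrite <- ln_1. apply ln_le'; lra. }
  set (kap := 2 * powr kbar (1 / (1 + alpha)) * (1 + krg)) in *.
  assert (Hkap : 2 <= kap) by (unfold kap; pose proof (Rmult_le_compat 1 (powr kbar (1 / (1 + alpha))) 1 (1 + krg) ltac:(lra) ltac:(lra) Hpk ltac:(lra)); lra).
  pose proof (Rmax_l (Rabs lH) (powr G (alpha / (1 + alpha)))).
  pose proof (Rmax_r (Rabs lH) (powr G (alpha / (1 + alpha)))).
  pose proof (Rle_abs lH). pose proof (Rabs_pos lH). pose proof (Rle_abs (- lH)) as Hnl. rewrite Rabs_Ropp in Hnl.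
  destruct (Rle_dec lM (Rabs lH)) as [Hc|Hc].
  - assert (kap * Rabs lH <= kap * Rmax (Rabs lH) (powr G (alpha / (1 + alpha)))) by (apply Rmult_le_compat_l; lra).
    assert (2 * Rabs lH <= kap * Rabs lH) by (apply Rmult_le_compat_r; lra). lra.
  - set (t := lH + lM) in *.
    assert (Ht : 0 < t) by (unfold t; lra).
    assert (Ht2 : t <= 2 * lM) by (unfold t; lra).
    assert (0 < t * S) by (apply Rmult_lt_0_compat; lra).
    assert (HGp : 0 < G) by nra.
    set (c := 1 + krg) in *. assert (Hc0 : 0 < c) by (unfold c; lra).
    rewrite (powr_pos S) in HlMb by lra.
    assert (L1 : ln t <= ln 2 + ln kbar + alpha * ln S).
    { assert (Q : t <= 2 * kbar * exp (alpha * ln S)) by lra.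
      apply (ln_le' _ _ Ht) in Q. rewrite !ln_mult, ln_exp in Q by (try apply exp_pos; lra). lra. }
    assert (L2 : ln S <= ln c + ln G - ln t).
    { assert (Q : S <= c * G * / t).
      { apply Rmult_le_reg_r with t; auto. rewrite Rmult_assoc, Rinv_l by lra. lra. }
      apply (ln_le' _ _ HS) in Q. rewrite !ln_mult, ln_Rinv in Q by (try apply Rmult_lt_0_compat; try apply Rinv_0_lt_compat; lra). lra. }
    assert (Hl2 : 0 <= ln 2) by (rewrite <- ln_1; apply ln_le'; lra).
    assert (Hlc : 0 <= ln c) by (rewrite <- ln_1; apply ln_le'; unfold c; lra).
    assert (Hlk : 0 <= ln kbar) by (rewrite <- ln_1; apply ln_le'; lra).
    set (b := / (1 + alpha)).
    assert (Hb : b * (1 + alpha) = 1) by (unfold b; field; lra).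
    assert (Hb0 : 0 < b) by (unfold b; apply Rinv_0_lt_compat; lra).
    assert (L3 : (1 + alpha) * ln t <= ln 2 + ln kbar + alpha * ln c + alpha * ln G).
    { assert (alpha * ln S <= alpha * (ln c + ln G - ln t)) by (apply Rmult_le_compat_l; lra). lra. }
    assert (L4 : ln t <= b * (ln 2 + ln kbar + alpha * ln c + alpha * ln G)).
    { replace (ln t) with (b * ((1 + alpha) * ln t)) by (rewrite <- Rmult_assoc, Hb; ring).
      apply Rmult_le_compat_l; lra. }
    assert (L5 : ln t <= ln 2 + b * ln kbar + ln c + (alpha * b) * ln G).
    { assert (b * ln 2 <= ln 2). { assert (b <= 1) by nra. nra. }
      assert (b * alpha * ln c <= ln c). { assert (b * alpha <= 1) by nra. nra. }
      nra. }
    assert (Hfin : t <= kap * powr G (alpha / (1 + alpha))).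
    { unfold kap. rewrite !powr_pos by lra.
      replace (1 / (1 + alpha)) with b by (unfold b; field; lra).
      replace (alpha / (1 + alpha)) with (alpha * b) by (unfold b; field; lra).
      rewrite <- (exp_ln t) by lra. rewrite <- (exp_ln 2) at 1 by lra. rewrite <- (exp_ln c) by lra.
      rewrite <- !exp_plus. apply exp_le'. lra. }
    assert (0 <= kap) by lra.
    assert (kap * powr G (alpha / (1 + alpha)) <= kap * Rmax (Rabs lH) (powr G (alpha / (1 + alpha)))) by (apply Rmult_le_compat_l; lra).
    lra.
Qed.
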